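(* Fix any number of agents and items and any reported strict linear orders of all agents over all items, and consider the simultaneous eating algorithm in two scenarios. In the normal scenario, all agents eat according to the algorithm throughout. In the pause scenario, the process is identical to the normal scenario up to a time $t$; from time $t$ on, some set $S$ of agents is paused (eats nothing) for some period of time (of arbitrary length, possibly forever), after which these agents resume eating according to the algorithm, while all agents outside $S$ continue eating according to the algorithm throughout. Then for every item and every moment $s \ge t$ (up to the moment the item is exhausted in the normal scenario), the remaining amount of that item at time $s$ in the pause scenario is at least its remaining amount at time $s$ in the normal scenario.
   Context: Simultaneous eating algorithm: there are agents and divisible items of unit supply; each agent has a reported strict linear order over all items. Every non-paused agent consumes, at rate $1$ per unit time, its most preferred item (according to its report) among the items with positive remaining supply; when an item is exhausted, the agents consuming it move on to their most preferred item still having positive remaining supply. A paused agent consumes nothing while paused. *)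

(* Defs.v *)
From Stdlib Require Import Reals.
From mathcomp Require Import all_boot.

Set Implicit Arguments.
Unset Strict Implicit.
Unset Printing Implicit Defensive.
Local Open Scope R_scope.

Definition strict_linear_order (I : finType) (r : rel I) : Prop :=
  irreflexive r /\ transitive r /\ (forall i j : I, i != j -> r i j || r j i).

(* c a i s = amount of item i eaten by agent a during [0, s].
   Remaining supply of item i at time s (each item has unit supply). *)
Definition remaining (A I : finType) (c : A -> I -> R -> R) (i : I) (s : R) : R :=
  (1 - \big[Rplus/0]_(a : A) c a i s).

(* i is agent a's most preferred item (pref a i j = "a strictly prefers i to j")
   among the items with positive remaining supply rem. *)
Definition top_item (A I : finType) (pref : A -> rel I) (rem : I -> R) (a : A) (i : I)
  : Prop :=
  (0 < rem i) /\ (forall j : I, j != i -> (0 < rem j) -> pref a i j).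

Definition right_deriv (f : R -> R) (s l : R) : Prop :=
  forall eps : R, (0 < eps) -> exists delta : R, (0 < delta) /\
    forall h : R, (0 < h < delta) -> (Rabs ((f (s + h) - f s) / h - l) < eps).

(* c is a run of the simultaneous eating algorithm from time 0, where
   active a s says that agent a is not paused at time s: at every time s >= 0
   each active agent eats (at rate 1) its most preferred item with positive
   remaining supply, and nothing else; paused agents eat nothing. *)
Definition eating_process (A I : finType) (pref : A -> rel I)
  (active : A -> R -> Prop) (c : A -> I -> R -> R) : Prop :=
  (forall a i, c a i 0 = 0) /\
  (forall a i (s : R), (0 < s) -> continuity_pt (c a i) s) /\
  (forall a i (s : R), (0 <= s) ->
     let eating := active a s /\ top_item pref (fun j => remaining c j s) a i in
     (eating -> right_deriv (c a i) s 1) /\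
     (~ eating -> right_deriv (c a i) s 0)).

(* Activity in the pause scenario: agents in S are paused from time t on,
   until time t' if e = Some t', forever if e = None. *)
Definition pause_active (A : finType) (S : {set A}) (t : R) (e : option R)
  (a : A) (u : R) : Prop :=
  ~ (a \in S /\ (t <= u) /\
     match e with Some t' => (u < t') | None => True end).

(* Main.v *)
Require Import Defs.
From Stdlib Require Import Reals.
From mathcomp Require Import all_boot.
From Stdlib Require Import Lra Classical.
From HB Require Import structures.
Local Open Scope R_scope.

Lemma cont_eps (f : R -> R) x : continuity_pt f x ->
  forall eta, 0 < eta -> exists d, 0 < d /\ forall y, Rabs (y - x) < d -> Rabs (f y - f x) < eta.
Proof.
move=> H eta Heta; have [d [Hd Hy]] := H eta Heta.
exists d; split=> // y Hyx; case: (Req_dec y x) => [->|Hne].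
  by rewrite Rminus_diag Rabs_R0.
apply: (Hy y); split; first by split=> //; apply: not_eq_sym.
exact: Hyx.
Qed.

Lemma cont_lin1 (f : R -> R) m x : continuity_pt f x -> continuity_pt (fun y => f y - m * y) x.
Proof.
move=> H. change (continuity_pt (minus_fct f (mult_real_fct m id)) x).
apply: continuity_pt_minus => //; apply: continuity_pt_scal.
apply: derivable_continuous_pt; exact: derivable_pt_id.
Qed.

Lemma cont_lin2 (f : R -> R) m x : continuity_pt f x -> continuity_pt (fun y => m * y - f y) x.
Proof.
move=> H. change (continuity_pt (minus_fct (mult_real_fct m id) f) x).
apply: continuity_pt_minus => //; apply: continuity_pt_scal.
apply: derivable_continuous_pt; exact: derivable_pt_id.
Qed.

Lemma real_ind (a : R) (P : R -> Prop) :
  (forall c, a <= c -> (forall u, a <= u < c -> P u) -> P c) ->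
  (forall c, a <= c -> (forall u, a <= u <= c -> P u) ->
     exists d, 0 < d /\ forall u, c < u < c + d -> P u) ->
  forall s, a <= s -> P s.
Proof.
move=> Ha Hb s0 Hs0; apply: NNPP => HnP.
pose E x := a <= x <= s0 /\ forall u, a <= u < x -> P u.
have HB : bound E by exists s0 => x [[_ ?] _].
have HE : exists x, E x by exists a; split; [lra| move=> u; lra].
have [m [Hub Hlub]] := completeness E HB HE.
have Ham : a <= m by apply: Hub; split; [lra| move=> u; lra].
have Hms0 : m <= s0 by apply: Hlub => x [[_ ?] _].
have Hlt : forall u, a <= u < m -> P u.
  move=> u Hu; apply: NNPP => Hnu.
  have : m <= u.
    apply: Hlub => x [Hx1 Hx2]; apply: Rnot_lt_le => Hux.
    apply: Hnu; apply: Hx2; lra.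
  lra.
have Pm : P m by apply: Ha.
case: (Req_dec m s0) => [Heq|Hne]; first by subst; exact: HnP Pm.
have [d [Hd Hd2]] := Hb m Ham (fun u Hu => match Rle_lt_or_eq_dec u m (proj2 Hu) with
   | left h => Hlt u (conj (proj1 Hu) h) | right h => eq_ind_r P Pm h end).
pose x := Rmin (m + d/2) s0.
have Hx1 : x <= m + d/2 by apply: Rmin_l.
have Hx2 : x <= s0 by apply: Rmin_r.
have Hx3 : m < x by apply: Rmin_glb_lt; lra.
have : x <= m.
  apply: Hub; split; first lra.
  move=> u Hu; case: (Rlt_le_dec u m) => Hum; first by apply: Hlt; lra.
  case: (Req_dec u m) => [->//|Hne'].
  apply: Hd2; lra.
lra.
Qed.

Definition RD (f : R -> R) (x : R) : Prop :=
  forall eps, 0 < eps -> exists d, 0 < d /\ forall h, 0 < h < d -> - (eps * h) <= f (x + h) - f x.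

Lemma dini_mono (f : R -> R) a b :
  (forall x, a <= x < b -> RD f x) -> (forall x, a < x <= b -> continuity_pt f x) ->
  a <= b -> f a <= f b.
Proof.
move=> HR HC Hab.
have key : forall eps, 0 < eps -> f a - eps * (b - a) <= f b.
  move=> eps Heps.
  pose P u := u <= b -> f a - eps * (u - a) <= f u.
  suff: P b by apply; lra.
  apply: (@real_ind a P _ _ b); last lra.
  - move=> c Hac Hlt Hcb.
    case: (Req_dec c a) => [->|Hne]; first lra.
    apply: Rnot_lt_le => Hbad.
    have Hc : continuity_pt f c by apply: HC; lra.
    set eta := f a - eps * (c - a) - f c.
    have Heta : 0 < eta by rewrite /eta; lra.
    have [d [Hd Hy]] := @cont_eps f c Hc (Rmin (eta/2) (eps * eta / 2 / (eps + 1))) ltac:(apply: Rmin_glb_lt; apply: Rdiv_lt_0_compat; nra).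
    pose u := Rmax a (c - Rmin (d/2) (eta / 2 / (eps + 1))).
    have Hu1 : a <= u by apply: Rmax_l.
    have Hm1 := Rmin_l (d/2) (eta / 2 / (eps + 1)).
    have Hm2 := Rmin_r (d/2) (eta / 2 / (eps + 1)).
    have Hm3 : 0 < Rmin (d/2) (eta / 2 / (eps + 1)) by apply: Rmin_glb_lt; apply: Rdiv_lt_0_compat; lra.
    have Hu2 : u < c by apply: Rmax_lub_lt; lra.
    have Hu3 : c - Rmin (d/2) (eta / 2 / (eps + 1)) <= u by apply: Rmax_r.
    have Pu := Hlt u (conj Hu1 Hu2) ltac:(lra).
    have Hfu := Hy u ltac:(rewrite Rabs_left; lra).
    have Hm4 := Rmin_l (eta/2) (eps * eta / 2 / (eps + 1)).
    move: Hfu => /Rabs_def2 Hfu.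
    have : eps * (c - u) <= eps * (eta / 2 / (eps + 1)) by apply: Rmult_le_compat_l; lra.
    have : eps * (eta / 2 / (eps + 1)) < eta / 2.
      rewrite /Rdiv. rewrite -Rmult_assoc. apply: (Rmult_lt_reg_r (eps + 1)); first lra.
      rewrite Rmult_assoc Rinv_l; last lra. nra.
    move=> _ _. have Heps2 : 0 < eps * (c - u) by nra.
    rewrite /eta in Hm4 Hfu. nra.
  - move=> c Hac Hle.
    case: (Rlt_le_dec c b) => Hcb; last first.
      exists 1; split; first lra; move=> u Hu Hub; lra.
    have Pc := Hle c ltac:(lra) ltac:(lra).
    have [d [Hd Hh]] := HR c ltac:(lra) eps Heps.
    exists d; split=> // u Hu Hub.
    have := Hh (u - c) ltac:(lra).
    replace (c + (u - c)) with u by ring. nra.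
case: (Req_dec a b) => [->|Hne]; first lra.
apply: Rnot_lt_le => Hbad.
have := key ((f a - f b) / (2 * (b - a))) ltac:(apply: Rdiv_lt_0_compat; lra).
have -> : (f a - f b) / (2 * (b - a)) * (b - a) = (f a - f b) / 2 by field; lra.
lra.
Qed.


Lemma RD_lower f x l m : right_deriv f x l -> m <= l -> RD (fun y => f y - m * y) x.
Proof.
move=> H Hm eps Heps; have [d [Hd Hh]] := H eps Heps.
exists d; split=> // h Hh0; have := Hh h Hh0 => /Rabs_def2 [_ H2].
have Hq : f (x + h) - f x = (f (x + h) - f x) / h * h by field; lra.
set q := (f (x + h) - f x) / h in H2 Hq.
have : (l - eps) * h <= q * h by apply: Rmult_le_compat_r; lra.
nra.
Qed.

Lemma RD_upper f x l m : right_deriv f x l -> l <= m -> RD (fun y => m * y - f y) x.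
Proof.
move=> H Hm eps Heps; have [d [Hd Hh]] := H eps Heps.
exists d; split=> // h Hh0; have := Hh h Hh0 => /Rabs_def2 [H1 _].
have Hq : f (x + h) - f x = (f (x + h) - f x) / h * h by field; lra.
set q := (f (x + h) - f x) / h in H1 Hq.
have : q * h <= (l + eps) * h by apply: Rmult_le_compat_r; lra.
nra.
Qed.

Lemma lin_lemma f a b l :
  (forall x, a <= x < b -> right_deriv f x l) -> (forall x, a < x <= b -> continuity_pt f x) ->
  a <= b -> f b = f a + l * (b - a).
Proof.
move=> HR HC Hab.
have H1 : (fun y => f y - l * y) a <= (fun y => f y - l * y) b.
  apply: (@dini_mono (fun y => f y - l * y) a b) => // x Hx; [apply: (@RD_lower f x l); [exact: HR | apply: Rle_refl] | apply: cont_lin1; exact: HC].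
have H2 : (fun y => l * y - f y) a <= (fun y => l * y - f y) b.
  apply: (@dini_mono (fun y => l * y - f y) a b) => // x Hx; [apply: (@RD_upper f x l); [exact: HR | apply: Rle_refl] | apply: cont_lin2; exact: HC].
simpl in H1, H2; lra.
Qed.

Lemma fin_delta (T : finType) (Q : T -> R -> Prop) :
  (forall x, exists d, 0 < d /\ forall h, 0 < h < d -> Q x h) ->
  exists d, 0 < d /\ forall x h, 0 < h < d -> Q x h.
Proof.
move=> H.
suff [d [Hd Hl]] : exists d, 0 < d /\ forall x, x \in enum T -> forall h, 0 < h < d -> Q x h.
  by exists d; split=> // x h Hh; apply: Hl => //; rewrite mem_enum.
elim: (enum T) => [|y l [d [Hd Hl]]].
  by exists 1; split; [lra | move=> x].
have [dy [Hdy Hy]] := H y.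
exists (Rmin dy d); split; first by apply: Rmin_glb_lt.
move=> x; rewrite inE => /orP [/eqP ->|Hx] h Hh.
  apply: Hy; have := Rmin_l dy d; lra.
apply: Hl => //; have := Rmin_r dy d; lra.
Qed.

Lemma Rplus_assoc' : associative Rplus. Proof. move=> x y z; ring. Qed.
HB.instance Definition _ := Monoid.isComLaw.Build R 0 Rplus Rplus_assoc' Rplus_comm Rplus_0_l.

Lemma sum_le (A : finType) (F G : A -> R) : (forall a, F a <= G a) ->
  \big[Rplus/0]_(a : A) F a <= \big[Rplus/0]_(a : A) G a.
Proof.
move=> H; apply: (big_ind2 (fun x y => x <= y)) => //; first lra.
by move=> *; apply: Rplus_le_compat.
Qed.

Lemma sum_const (A : finType) (d : R) : \big[Rplus/0]_(a : A) d = INR #|A| * d.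
Proof.
rewrite big_const; elim: #|A| => [|n IH] /=; first ring.
rewrite IH; case: n {IH} => [|n] /=; ring.
Qed.

Lemma sum_split (A : finType) (F G : A -> R) :
  \big[Rplus/0]_(a : A) (F a + G a) = \big[Rplus/0]_(a : A) F a + \big[Rplus/0]_(a : A) G a.
Proof. exact: big_split. Qed.


Section Proc.
Variables (A I : finType) (pref : A -> rel I) (active : A -> R -> Prop) (c : A -> I -> R -> R).
Hypothesis H : eating_process pref active c.

Definition eats a k s := active a s /\ top_item pref (fun j => remaining c j s) a k.

Lemma rd_exists a k x : 0 <= x -> exists l, 0 <= l <= 1 /\ right_deriv (c a k) x l.
Proof.
move=> Hx; have [_ [_ H3]] := H; have [H31 H32] := H3 a k x Hx.
case: (classic (eats a k x)) => He.
  by exists 1; split; [lra | exact: H31].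
by exists 0; split; [lra | exact: H32].
Qed.

Lemma lip a k u v : 0 <= u <= v -> c a k u <= c a k v /\ c a k v - c a k u <= v - u.
Proof.
move=> Huv; have [_ [H2 _]] := H.
have HC : forall x, u < x <= v -> continuity_pt (c a k) x by move=> x Hx; apply: H2; lra.
split.
  suff: c a k u - 0 * u <= c a k v - 0 * v by lra.
  apply: (@dini_mono (fun y => c a k y - 0 * y) u v); last lra.
  - move=> x Hx; have [l [Hl Hd]] := rd_exists a k x ltac:(lra).
    apply: (@RD_lower _ _ l) => //; lra.
  - by move=> x Hx; apply: cont_lin1; apply: HC.
suff: 1 * u - c a k u <= 1 * v - c a k v by lra.
apply: (@dini_mono (fun y => 1 * y - c a k y) u v); last lra.
- move=> x Hx; have [l [Hl Hd']] := rd_exists a k x ltac:(lra).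
  apply: (@RD_upper _ _ l) => //; lra.
- by move=> x Hx; apply: cont_lin2; apply: HC.
Qed.

Lemma rem_lip k u v : 0 <= u <= v ->
  remaining c k v <= remaining c k u /\
  remaining c k u - INR #|A| * (v - u) <= remaining c k v.
Proof.
move=> Huv; rewrite /remaining; split.
  suff: \big[Rplus/0]_a c a k u <= \big[Rplus/0]_a c a k v by lra.
  by apply: sum_le => a; have := lip a k u v Huv; lra.
suff: \big[Rplus/0]_a c a k v <= \big[Rplus/0]_a (c a k u + (v - u)).
  by rewrite sum_split sum_const; lra.
by apply: sum_le => a; have := lip a k u v Huv; lra.
Qed.

Lemma top_item_ext (r1 r2 : I -> R) a k : (forall j, 0 < r1 j <-> 0 < r2 j) ->
  top_item pref r1 a k -> top_item pref r2 a k.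
Proof.
move=> Hj [H1 H2]; split; first by apply/Hj.
by move=> j Hne Hp; apply: H2 => //; apply/Hj.
Qed.

Lemma local_struct :
  (forall a s, 0 <= s -> exists d, 0 < d /\ forall h, 0 < h < d -> (active a (s + h) <-> active a s)) ->
  forall s, 0 <= s -> exists d, 0 < d /\ forall a k h, 0 < h < d ->
    (eats a k s -> c a k (s + h) = c a k s + h) /\ (~ eats a k s -> c a k (s + h) = c a k s).
Proof.
move=> Hact s Hs.
have [d1 [Hd1 Hav]] : exists d, 0 < d /\ forall j h, 0 < h < d ->
    (0 < remaining c j (s + h) <-> 0 < remaining c j s).
  apply: fin_delta => j.
  case: (Rlt_le_dec 0 (remaining c j s)) => Hj.
    have HN := pos_INR #|A|.
    exists (remaining c j s / (INR #|A| + 1)); split.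
      by apply: Rdiv_lt_0_compat; lra.
    move=> h Hh; split=> // _.
    have [_ Hl] := rem_lip j s (s + h) ltac:(lra).
    have : (INR #|A| + 1) * h < remaining c j s.
      have := Hh; move=> [_ Hh2].
      have := Rmult_lt_compat_l (INR #|A| + 1) _ _ ltac:(lra) Hh2.
      by rewrite /Rdiv -Rmult_assoc (Rmult_comm _ (remaining c j s)) Rmult_assoc Rinv_r; lra.
    nra.
  exists 1; split; first lra.
  move=> h Hh; split; last lra.
  have [Hl _] := rem_lip j s (s + h) ltac:(lra); lra.
have [d2 [Hd2 Hac]] := @fin_delta A (fun a h => active a (s + h) <-> active a s)
  (fun a => Hact a s Hs).
exists (Rmin d1 d2); split; first by apply: Rmin_glb_lt.
have Hm1 := Rmin_l d1 d2; have Hm2 := Rmin_r d1 d2.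
move=> a k h Hh.
have Heq : forall x, s <= x < s + h -> (eats a k x <-> eats a k s).
  move=> x Hx; case: (Req_dec x s) => [->//|Hne].
  have -> : x = s + (x - s) by ring.
  have Hx1 : 0 < x - s < d1 by lra.
  have Hx2 : 0 < x - s < d2 by lra.
  rewrite /eats; split=> [[Ha Ht]|[Ha Ht]]; split.
  - by apply/(Hac a (x - s) Hx2).
  - by apply: top_item_ext Ht => j; apply: Hav.
  - by apply/(Hac a (x - s) Hx2).
  - by apply: top_item_ext Ht => j; split=> /(Hav j (x - s) Hx1).
have [_ [H2 H3]] := H.
have HC : forall x, s < x <= s + h -> continuity_pt (c a k) x by move=> x Hx; apply: H2; lra.
split=> He.
- rewrite (@lin_lemma (c a k) s (s + h) 1); [ring | | exact: HC | lra].
  move=> x Hx; have [H31 _] := H3 a k x ltac:(lra); apply: H31; apply/(Heq x Hx); exact: He.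
- rewrite (@lin_lemma (c a k) s (s + h) 0); [ring | | exact: HC | lra].
  move=> x Hx; have [_ H32] := H3 a k x ltac:(lra); apply: H32; move/(Heq x Hx); exact: He.
Qed.

End Proc.
Arguments eats {A I}.
Arguments lip {A I pref active c}.
Arguments rem_lip {A I pref active c}.
Arguments local_struct {A I pref active c}.


Lemma pause_loc (A : finType) (S : {set A}) t e a s :
  exists d, 0 < d /\ forall h, 0 < h < d -> (pause_active S t e a (s + h) <-> pause_active S t e a s).
Proof.
rewrite /pause_active.
have Ht : exists d1, 0 < d1 /\ forall h, 0 < h < d1 -> (t <= s + h <-> t <= s).
  case: (Rlt_le_dec s t) => Hs.
    exists (t - s); split; [lra | move=> h Hh; lra].
  exists 1; split; [lra | move=> h Hh; lra].
have He : exists d2, 0 < d2 /\ forall h, 0 < h < d2 ->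
   ((match e with Some t' => s + h < t' | None => True end) <->
    (match e with Some t' => s < t' | None => True end)).
  case: e => [t'|]; last by exists 1; split; [lra | move=> h Hh; tauto].
  case: (Rlt_le_dec s t') => Hs.
    exists (t' - s); split; [lra | move=> h Hh; lra].
  exists 1; split; [lra | move=> h Hh; lra].
have [d1 [Hd1 H1]] := Ht; have [d2 [Hd2 H2]] := He.
exists (Rmin d1 d2); split; first by apply: Rmin_glb_lt.
have := Rmin_l d1 d2; have := Rmin_r d1 d2.
move=> Hm2 Hm1 h Hh.
have := H1 h ltac:(lra); have := H2 h ltac:(lra).
tauto.
Qed.

Theorem lemma2 (A I : finType) (pref : A -> rel I)
  (Hpref : forall a : A, strict_linear_order (pref a))
  (S : {set A}) (t : R) (e : option R)
  (ht : (0 <= t))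
  (he : match e with Some t' => (t <= t') | None => True end)
  (cN cP : A -> I -> R -> R)
  (HN : eating_process pref (fun _ _ => True) cN)
  (HP : eating_process pref (pause_active S t e) cP) :
  forall (i : I) (s : R), (t <= s) ->
    (forall u : R, (0 <= u < s) -> (0 < remaining cN i u)) ->
    (remaining cN i s <= remaining cP i s).
Proof.
move=> i s Hts _.
pose Inv u := forall k, remaining cN k u <= remaining cP k u.
suff: Inv s by apply.
apply: (@real_ind 0 Inv _ _ s); last lra.
- move=> c Hc Hlt k.
  case: (Req_dec c 0) => [->|Hne].
    rewrite /remaining.
    have [HN0 _] := HN; have [HP0 _] := HP.
    have E1 : \big[Rplus/0]_a cN a k 0 = \big[Rplus/0]_a cP a k 0.
      by apply: eq_bigr => a _; rewrite HN0 HP0.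
    rewrite E1; apply: Rle_refl.
  apply: Rnot_lt_le => Hbad.
  set D := remaining cN k c - remaining cP k c.
  have HNA := pos_INR #|A|.
  pose u := Rmax 0 (c - D / (2 * (INR #|A| + 1))).
  have Hq : 0 < D / (2 * (INR #|A| + 1)) by apply: Rdiv_lt_0_compat; rewrite /D; lra.
  have Hu0 : 0 <= u by apply: Rmax_l.
  have Hu1 : c - D / (2 * (INR #|A| + 1)) <= u by apply: Rmax_r.
  have Hu2 : u < c by apply: Rmax_lub_lt; lra.
  have Iu := Hlt u (conj Hu0 Hu2) k.
  have [HN1 _] := rem_lip HN k u c ltac:(lra).
  have [_ HP2] := rem_lip HP k u c ltac:(lra).
  have : INR #|A| * (c - u) <= INR #|A| * (D / (2 * (INR #|A| + 1))).
    by apply: Rmult_le_compat_l; lra.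
  have : INR #|A| * (D / (2 * (INR #|A| + 1))) < D.
    have -> : INR #|A| * (D / (2 * (INR #|A| + 1))) = D * (INR #|A| / (2 * (INR #|A| + 1))).
      by field; lra.
    have : INR #|A| / (2 * (INR #|A| + 1)) < 1.
      apply: (Rmult_lt_reg_r (2 * (INR #|A| + 1))); first lra.
      rewrite /Rdiv Rmult_assoc Rinv_l; lra.
    move=> Hr. have HD0 : 0 < D by rewrite /D; lra.
    have := Rmult_lt_compat_l D _ _ HD0 Hr; lra.
  have HD : D = remaining cN k c - remaining cP k c by [].
  lra.
- move=> c Hc Hle.
  have Ic : Inv c by apply: Hle; lra.
  have [dN [HdN LN]] := local_struct HN (fun a s _ => ex_intro _ 1 (conj Rlt_0_1 (fun h _ => conj (fun _ => Logic.I) (fun _ => Logic.I)))) c Hc.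
  have [dP [HdP LP]] := local_struct HP (fun a s _ => @pause_loc A S t e a s) c Hc.
  have [d [Hd Hk]] : exists d, 0 < d /\ forall k h, 0 < h < d ->
      remaining cN k (c + h) <= remaining cP k (c + h).
    apply: fin_delta => k.
    case: (Rlt_le_dec (remaining cN k c) (remaining cP k c)) => Hlt.
      have HNA := pos_INR #|A|.
      set D := remaining cP k c - remaining cN k c.
      exists (D / (INR #|A| + 1)); split; first by apply: Rdiv_lt_0_compat; rewrite /D; lra.
      move=> h Hh.
      have [HN1 _] := rem_lip HN k c (c + h) ltac:(lra).
      have [_ HP2] := rem_lip HP k c (c + h) ltac:(lra).
      have : (INR #|A| + 1) * h < D.
        have [_ Hh2] := Hh.
        have := Rmult_lt_compat_l (INR #|A| + 1) _ _ ltac:(lra) Hh2.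
        by rewrite /Rdiv -Rmult_assoc (Rmult_comm _ D) Rmult_assoc Rinv_r; lra.
      have HD : D = remaining cP k c - remaining cN k c by [].
      have : INR #|A| * h <= (INR #|A| + 1) * h by nra.
      lra.
    have HeqD : remaining cN k c = remaining cP k c by have := Ic k; lra.
    exists (Rmin dN dP); split; first by apply: Rmin_glb_lt.
    move=> h Hh.
    have HhN : 0 < h < dN by have := Rmin_l dN dP; lra.
    have HhP : 0 < h < dP by have := Rmin_r dN dP; lra.
    suff: \big[Rplus/0]_a cP a k (c + h) + \big[Rplus/0]_a cN a k c <=
          \big[Rplus/0]_a cN a k (c + h) + \big[Rplus/0]_a cP a k c.
      by move: HeqD; rewrite /remaining; lra.
    rewrite -!sum_split; apply: sum_le => a.
    have [LN1 LN2] := LN a k h HhN; have [LP1 LP2] := LP a k h HhP.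
    case: (classic (eats pref (pause_active S t e) cP a k c)) => HeP.
      have HeN : eats pref (fun _ _ => True) cN a k c.
        have [_ [Hpos Htop]] := HeP.
        split=> //; split; first by rewrite HeqD.
        move=> j Hj Hpj; apply: Htop => //; have := Ic j; lra.
      rewrite (LN1 HeN) (LP1 HeP); lra.
    rewrite (LP2 HeP).
    have [Hm _] := lip HN a k c (c + h) ltac:(lra); lra.
  exists d; split=> // u Hu k.
  have -> : u = c + (u - c) by ring.
  apply: Hk; lra.
Qed.
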